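(* If $u,v\in\mathbb{P}^*$ both have increasing/decreasing factorizations, then $u\backsim v$ if and only if $u$ is a rearrangement of $v$.
   Context: $\mathbb{P}^*$ is the set of finite words over the positive integers $\mathbb{P}$ (usual order). For $w=w_1\ldots w_n$, $\mathrm{wt}(w)=t^{n}x^{\sum_i w_i}$. For words $u,w$, $u\le w$ (generalized factor order) if there are $|u|$ consecutive letters of $w$ whose $i$-th letter is $\ge$ the $i$-th letter of $u$ for each $i$. $\mathcal{F}(u)=\{w\in\mathbb{P}^*:u\le w\}$ and $F(u;t,x)=\sum_{w\in\mathcal{F}(u)}\mathrm{wt}(w)$. Two words are Wilf equivalent, $u\backsim v$, iff $F(u;t,x)=F(v;t,x)$. A word $u=u_1\ldots u_n$ has an increasing/decreasing factorization if $u_1\le\cdots\le u_n$ or there is $k<n$ with $u_1\le\cdots\le u_k>u_{k+1}\ge\cdots\ge u_n$. A rearrangement of $u$ is a word obtained by permuting its letters. *)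

(* Defs.v *)
From mathcomp Require Import all_boot.
Set Implicit Arguments. Unset Strict Implicit. Unset Printing Implicit Defensive.

(* Words over the positive integers P are modelled as [seq nat] all of whose
   letters are positive. *)
Definition pword (w : seq nat) : bool := all (fun a => 0 < a) w.

Definition gfo (u w : seq nat) : bool :=
  has (fun i => (i + size u <= size w) &&
                all2 leq u (take (size u) (drop i w)))
      (iota 0 (size w).+1).

(* Coefficient of t^n x^m in F(u;t,x) = sum_{w in F(u)} t^|w| x^(sum w):
   the number of positive words w of length n with letter sum m and u <= w.
   Such words have all letters <= m, so they are enumerated as n-tuples
   of elements of 'I_(m.+1). *)
Definition Fcoef (u : seq nat) (n m : nat) : nat :=
  #|[set w : n.-tuple 'I_m.+1 |
       [&& pword (map val w), sumn (map val w) == m & gfo u (map val w)]]|.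

(* Wilf equivalence: F(u;t,x) = F(v;t,x) as formal power series,
   i.e. all coefficients agree. *)
Definition wilf_equiv (u v : seq nat) : Prop :=
  forall n m, Fcoef u n m = Fcoef v n m.

Definition inc_dec_fact (u : seq nat) : Prop :=
  sorted leq u \/
  exists k, [/\ 0 < k, k < size u, sorted leq (take k u),
               nth 0 u k.-1 > nth 0 u k & sorted geq (drop k u)].

(* Main.v *)
Require Import Defs.
From mathcomp Require Import all_boot.
From Stdlib Require Import Lia.
Ltac slia_intro :=
  repeat match goal with
  | |- is_true (_ && _) -> _ => case/andP
  | |- is_true (_ <= _) -> _ => move/leP
  | |- is_true (_ == _) -> _ => move/eqP
  | |- is_true (~~ (_ <= _)) -> _ => move/negP
  | |- is_true (~~ (_ == _)) -> _ => move/eqP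
  | |- ~ _ -> _ => intro
  | |- (_ -> False) -> _ => intro
  | |- _ -> _ => intro
  end.
Ltac slia_goal :=
  try (match goal with
  | |- is_true (_ <= _) => apply/leP
  | |- is_true (_ == _) => apply/eqP
  | |- is_true (~~ (_ <= _)) => rewrite -ltnNge; apply/leP
  | |- is_true (~~ (_ == _)) => apply/eqP
  end); lia.
Ltac slia :=
  repeat (match goal with |- ~ _ => intro | |- _ -> False => intro end);
  repeat match goal with
  | H : is_true (_ && _) |- _ => revert H
  | H : is_true (_ <= _) |- _ => revert H
  | H : is_true (_ == _) |- _ => revert H
  | H : is_true (~~ (_ <= _)) |- _ => revert H
  | H : is_true (~~ (_ == _)) |- _ => revert H
  | H : @eq nat _ _ |- _ => revert H
  | H : ~ (@eq nat _ _) |- _ => revert H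
  end;
  rewrite -?ltnNge -?subn1 ?minnE ?maxnE; try unfold addn; try unfold subn; try unfold muln;
  slia_intro;
  repeat (match goal with |- is_true (_ && _) => apply/andP; split end);
  slia_goal.

Set Implicit Arguments. Unset Strict Implicit. Unset Printing Implicit Defensive.

Lemma nthW L m (w : L.-tuple 'I_m.+1) (q : 'I_L) : nth 0 (map val w) q = tnth w q.
Proof. by rewrite (nth_map ord0) ?size_tuple // -tnth_nth. Qed.

Lemma sumW L m (w : L.-tuple 'I_m.+1) : sumn (map val w) = \sum_(q < L) tnth w q.
Proof. by rewrite sumnE big_map big_tuple. Qed.

Definition Cnt L m (r : nat -> nat) :=
  #|[set w : L.-tuple 'I_m.+1 | (sumn (map val w) == m) &&
       [forall q : 'I_L, r q <= nth 0 (map val w) q]]|.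

Lemma Cnt_le L m (r1 r2 : nat -> nat) : \sum_(q < L) r1 q = \sum_(q < L) r2 q -> Cnt L m r1 <= Cnt L m r2.
Proof.
move=> Hs.
pose S1 := [set w : L.-tuple 'I_m.+1 | (sumn (map val w) == m) &&
       [forall q : 'I_L, r1 q <= nth 0 (map val w) q]].
pose f (w : L.-tuple 'I_m.+1) : L.-tuple 'I_m.+1 :=
  [tuple (inord (tnth w q - r1 q + r2 q) : 'I_m.+1) | q < L].
have key : forall w, w \in S1 ->
  (forall q : 'I_L, r1 q <= tnth w q) /\
  (forall q : 'I_L, tnth w q - r1 q + r2 q <= m) /\
  \sum_(q < L) (tnth w q - r1 q + r2 q) = m.
  move=> w; rewrite inE sumW => /andP[/eqP Hm /forallP Hr].
  have Hr' : forall q : 'I_L, r1 q <= tnth w q by move=> q; rewrite -nthW.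
  have Hsum : \sum_(q < L) (tnth w q - r1 q + r2 q) = m.
    rewrite big_split /= -Hs.
    have : \sum_(q < L) (tnth w q - r1 q) + \sum_(q < L) r1 q = m.
      rewrite -big_split /= -[RHS]Hm; apply: eq_bigr => q _; by rewrite subnK.
    by [].
  split=> //; split=> // q.
  by apply: (leq_trans _ (eq_leq Hsum)); rewrite (bigD1 q) //= leq_addr.
rewrite /Cnt -/S1 -(card_in_imset (f := f)).
  apply: subset_leq_card; apply/subsetP => w' /imsetP[w wS ->].
  have [H1 [H2 H3]] := key w wS.
  rewrite inE sumW; apply/andP; split.
    apply/eqP; rewrite -[RHS]H3; apply: eq_bigr => q _.
    by rewrite tnth_mktuple inordK // ltnS.
  apply/forallP => q; rewrite nthW tnth_mktuple inordK ?ltnS //.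
  exact: leq_addl.
move=> w1 w2 w1S w2S /= Hf.
have [A1 [B1 _]] := key w1 w1S; have [A2 [B2 _]] := key w2 w2S.
apply: eq_from_tnth => q; apply: val_inj => /=.
have := congr1 (fun t => val (tnth t q)) Hf => /=.
rewrite !tnth_mktuple !inordK ?ltnS // => /addIn.
move=> /(congr1 (addn^~ (r1 q))); by rewrite !subnK.
Qed.

Lemma Cnt_eq L m (r1 r2 : nat -> nat) : \sum_(q < L) r1 q = \sum_(q < L) r2 q -> Cnt L m r1 = Cnt L m r2.
Proof. by move=> H; apply/eqP; rewrite eqn_leq !Cnt_le. Qed.

Lemma Cnt0 L m (r : nat -> nat) : m < \sum_(q < L) r q -> Cnt L m r = 0.
Proof.
move=> H; apply: eq_card0 => w; rewrite inE sumW.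
apply/negP => /andP[/eqP Hm /forallP Hr].
have : \sum_(q < L) r q <= \sum_(q < L) tnth w q.
  by apply: leq_sum => q _; rewrite -nthW.
by rewrite Hm leqNgt H.
Qed.

Lemma Cnt_pos L m (r : nat -> nat) : \sum_(q < L) r q = m -> 0 < Cnt L m r.
Proof.
move=> H.
pose w : L.-tuple 'I_m.+1 := [tuple (inord (r q) : 'I_m.+1) | q < L].
have Hq : forall q : 'I_L, r q <= m by move=> q; apply: (leq_trans _ (eq_leq H)); rewrite (bigD1 q) //= leq_addr.
apply/card_gt0P; exists w; rewrite inE sumW; apply/andP; split.
  apply/eqP; rewrite -[RHS]H; apply: eq_bigr => q _.
  by rewrite tnth_mktuple inordK // ltnS.
by apply/forallP => q; rewrite nthW tnth_mktuple inordK // ltnS.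
Qed.

Definition Dm (u s : seq nat) (p : nat) : bool :=
  (p + size u <= size s) && all2 leq u (take (size u) (drop p s)).

Lemma gfo_exists u s N : size s = N -> gfo u s = [exists p : 'I_N.+1, Dm u s p].
Proof.
move=> <-; rewrite /gfo; apply/hasP/existsP.
  by case=> i; rewrite mem_iota add0n => Hi HD; exists (Ordinal Hi).
by case=> p Hp; exists (val p) => //; rewrite mem_iota add0n ltn_ord.
Qed.

Lemma all2_leqP (u t : seq nat) : size u = size t ->
  reflect (forall j, j < size u -> nth 0 u j <= nth 0 t j) (all2 leq u t).
Proof.
elim: u t => [|a u IH] [|b t] //= Hs.
  by constructor.
case: (boolP (a <= b)) => Hab /=.
  apply: (iffP (IH t _)); first by case: Hs.
    by move=> H [|j] //= /H.
  by move=> H j Hj; apply: (H j.+1).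
by constructor => /(_ 0 isT) /= H; rewrite H in Hab.
Qed.

Lemma DmP u s p : reflect (p + size u <= size s /\
    forall j, j < size u -> nth 0 u j <= nth 0 s (p + j)) (Dm u s p).
Proof.
rewrite /Dm; case: (boolP (p + size u <= size s)) => H /=; last by constructor; case.
have Hsz : size u = size (take (size u) (drop p s)).
  rewrite size_take size_drop; case: ltnP => //; slia.
apply: (iffP (all2_leqP Hsz)).
  by move=> H2; split=> // j Hj; move: (H2 j Hj); rewrite nth_take // nth_drop.
by case=> _ H2 j Hj; rewrite nth_take // nth_drop; apply: H2.
Qed.

Lemma sumn_all2 (u t : seq nat) : all2 leq u t -> sumn u <= sumn t.
Proof.
elim: u t => [|a u IH] [|b t] //= /andP[H1 H2].
by apply: leq_add => //; apply: IH.
Qed.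

Section XX.
Variables (L m : nat) (u : seq nat).

Definition base (w : L.-tuple 'I_m.+1) := pword (map val w) && (sumn (map val w) == m).
Definition DD (w : L.-tuple 'I_m.+1) (p : 'I_L.+1) := Dm u (map val w) p.

Lemma Fcoef_E : Fcoef u L m = #|[set w | base w && [exists p, DD w p]]|.
Proof.
apply: eq_card => w; rewrite !inE /base /DD -andbA.
by rewrite (gfo_exists _ (N := L)) // size_map size_tuple.
Qed.

Definition Rm (P : {set 'I_L.+1}) (q : nat) :=
  \max_(p in P | (p <= q) && (q < p + size u)) nth 0 u (q - p).

Lemma X_inval (P : {set 'I_L.+1}) p : p \in P -> L < p + size u ->
  #|[set w | base w && [forall p in P, DD w p]]| = 0.
Proof.
move=> pP Hp; apply: eq_card0 => w; rewrite inE.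
apply/negP => /andP[_ /forall_inP /(_ p pP) /DmP [H _]].
by rewrite size_map size_tuple leqNgt Hp in H.
Qed.

Lemma X_val (P : {set 'I_L.+1}) : (forall p, p \in P -> p + size u <= L) ->
  #|[set w | base w && [forall p in P, DD w p]]| = Cnt L m (fun q => maxn 1 (Rm P q)).
Proof.
move=> Hv; apply: eq_card => w; rewrite !inE /base.
have Hsz : size (map val w) = L by rewrite size_map size_tuple.
apply/andP/andP.
  case=> /andP[pw sm] H; split=> //; apply/forallP => q.
  rewrite geq_max; apply/andP; split.
    by move/(all_nthP 0): pw => /(_ q); rewrite Hsz ltn_ord; apply.
  apply/bigmax_leqP => p /andP[pP /andP[pq qp]].
  move/forall_inP: H => /(_ p pP) /DmP [_ H].
  have := H (q - p); rewrite (subnKC pq); apply.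
  move: pq qp; slia.
case=> sm H; split.
  apply/andP; split=> //.
  apply/(all_nthP 0) => i; rewrite Hsz => hi.
  by move/forallP: H => /(_ (Ordinal hi)); rewrite geq_max => /andP[].
apply/forall_inP => p pP; apply/DmP; split; first by rewrite Hsz; apply: Hv.
move=> j Hj.
have HL : p + j < L by move: (Hv p pP) Hj; slia.
move/forallP: H => /(_ (Ordinal HL)); rewrite geq_max => /andP[_] /=.
apply: leq_trans.
have -> : nth 0 u j = nth 0 u (p + j - p) by rewrite addKn.
apply: (leq_bigmax_cond p); rewrite pP leq_addr /=; move: Hj; slia.
Qed.
End XX.
From mathcomp Require Import all_order all_algebra.
Import GRing.Theory Num.Theory.

Lemma count_iotaS (F : pred nat) n : count F (iota 0 n.+1) = count F (iota 0 n) + F n.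
Proof. by rewrite -addn1 iotaD count_cat /= addn0. Qed.

Lemma convex_int (F : nat -> bool) n :
  (forall i j k, i <= j -> j <= k -> k < n -> F i -> F k -> F j) ->
  exists s, s + count F (iota 0 n) <= n /\
    forall j, ((j < n) && F j) = ((s <= j) && (j < s + count F (iota 0 n))).
Proof.
elim: n => [|n IH] Hc.
  by exists 0; split=> // j; rewrite ltn0 addn0 /=; case: (0 <= j); rewrite ?ltn0 ?andbF.
have [|s [Hs Hj]] := IH.
  by move=> i j k Hij Hjk Hk; apply: Hc => //; apply: ltnW.
rewrite count_iotaS.
set c := count F (iota 0 n) in Hs Hj *.
case: (boolP (F n)) => Fn /=.
  case: (posnP c) => c0.
    exists n; rewrite c0; split; first by rewrite add0n addn1.
    move=> j; rewrite add0n addn1 ltnS.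
    case: (ltngtP j n) => Hjn /=.
    - have -> : F j = false.
        apply/negP => Fj; have := Hj j; rewrite Hjn Fj c0 addn0 => /esym /andP[h1 h2].
        exfalso; move: h1 h2; slia.
      by [].
    - by rewrite ?andbF.
    - by rewrite Hjn Fn.
  have hsc : s < s + c by rewrite -{1}[s]addn0 ltn_add2l.
  have Fs : F s by have := Hj s; rewrite leqnn hsc /= => /andP[].
  have sn : s < n by have := Hj s; rewrite leqnn hsc /= => /andP[].
  have Hsc : s + c = n.
    apply/eqP; rewrite eqn_leq Hs /=.
    have Fn1 : F n.-1 by apply: (Hc s n.-1 n) => //; move: sn; slia.
    have := Hj n.-1; rewrite Fn1 andbT; move: sn => sn.
    have -> : n.-1 < n by move: sn; slia.
    move/esym => /andP[_]; move: sn; slia.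
  exists s; split; first by move: Hsc; slia.
  move=> j; rewrite addnA Hsc addn1 ltnS.
  case: (ltngtP j n) => Hjn /=.
  - by have := Hj j; rewrite Hsc Hjn /= => ->.
  - by rewrite ?andbF.
  - by rewrite Hjn Fn andbT (ltnW sn).
exists s; rewrite addn0; split; first by apply: leq_trans Hs _.
move=> j; case: (ltngtP j n) => Hjn /=.
- by rewrite -Hj Hjn ltnS (ltnW Hjn).
- rewrite ltnS leqNgt Hjn /=; apply/esym/negP => /andP[_ h]; move: h Hjn Hs; slia.
- rewrite Hjn ltnS leqnn (negbTE Fn) /=; apply/esym/negP => /andP[_ h]; move: h Hs; slia.
Qed.

Lemma geq_trans' : transitive geq.
Proof. by move=> x y z /= h1 h2; apply: leq_trans h2 h1. Qed.

Lemma incdec_convex u : inc_dec_fact u -> forall i j k, i <= j -> j <= k -> k < size u ->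
  minn (nth 0 u i) (nth 0 u k) <= nth 0 u j.
Proof.
case=> [Hs | [k0 [k0p k0n Hinc _ Hdec]]] i j k Hij Hjk Hk.
  have Hj : j < size u by apply: leq_ltn_trans Hk.
  have Hi : i < size u by apply: leq_ltn_trans Hj.
  apply: leq_trans (geq_minl _ _) _.
  exact: (sorted_leq_nth leq_trans leqnn 0 Hs).
case: (ltnP j k0) => Hjk0.
  have Hi : i < k0 by apply: leq_ltn_trans Hjk0.
  apply: leq_trans (geq_minl _ _) _.
  have Hsz : size (take k0 u) = k0 by rewrite size_take k0n.
  rewrite -(nth_take 0 Hi) -(nth_take 0 Hjk0).
  by apply: (sorted_leq_nth leq_trans leqnn 0 Hinc); rewrite ?inE ?Hsz.
have Hkk0 : k0 <= k by apply: leq_trans Hjk.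
apply: leq_trans (geq_minr _ _) _.
have Hsz : size (drop k0 u) = size u - k0 by rewrite size_drop.
rewrite -(subnKC Hjk0) -(subnKC Hkk0) -!nth_drop.
have := (sorted_leq_nth geq_trans' (fun x => leqnn x) 0 Hdec (j - k0) (k - k0)).
apply; rewrite ?inE ?Hsz; move: Hk Hjk Hkk0 Hjk0; slia.
Qed.

Lemma u_interval u a : inc_dec_fact u ->
  exists s, s + count (fun x => a < x) u <= size u /\
   forall j, ((j < size u) && (a < nth 0 u j)) = ((s <= j) && (j < s + count (fun x => a < x) u)).
Proof.
move=> Hu.
have E : count (fun x => a < x) u = count (fun j => a < nth 0 u j) (iota 0 (size u)).
  by rewrite -{1}(mkseq_nth 0 u) /mkseq count_map.
rewrite E; apply: convex_int => i j k Hij Hjk Hk Fi Fk.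
apply: leq_trans (incdec_convex Hu Hij Hjk Hk).
by rewrite leq_min Fi Fk.
Qed.

Lemma sum_count_iota (b : pred nat) L : \sum_(q < L) (b q : nat) = count b (iota 0 L).
Proof.
rewrite -(big_mkord xpredT (fun q => (b q : nat))) /index_iota subn0.
by elim: (iota 0 L) => [|x s IH]; rewrite ?big_nil ?big_cons //= IH.
Qed.

Lemma thr_sum x K : \sum_(1 <= a < K) (a < x : nat) = minn x K - 1.
Proof.
elim: K => [|K IH]; first by rewrite big_geq // minn0.
case: K IH => [|K] IH; first by rewrite big_geq //; slia.
rewrite big_nat_recr //= IH.
case: (ltnP K.+1 x) => h /=; slia.
Qed.

Lemma maxn1_thr x K : x <= K -> maxn 1 x = 1 + \sum_(1 <= a < K) (a < x : nat).
Proof. by rewrite thr_sum; slia. Qed.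

Section Cov.
Variable L : nat.

Definition cov (P : {set 'I_L.+1}) c q := [exists p in P, (p <= q) && (q < p + c)].
Definition fP (P : {set 'I_L.+1}) c := count (cov P c) (iota 0 L).

Lemma shift_count (P : {set 'I_L.+1}) s c : (forall p, p \in P -> p + s + c <= L) ->
  count (fun q => [exists p in P, (p + s <= q) && (q < p + s + c)]) (iota 0 L) = fP P c.
Proof.
move=> Hv.
case: (leqP s L) => sL; last first.
  rewrite /fP (eq_in_count (a2 := pred0)) ?count_pred0; last first.
    move=> q; rewrite mem_iota /= => qL.
    apply/negbTE/negP => /exists_inP[p pP /andP[h _]]; move: h qL sL; slia.
  rewrite (eq_in_count (a2 := pred0)) ?count_pred0 //.
  move=> q _ /=; apply/negbTE/negP => /exists_inP[p pP _]; move: (Hv p pP) sL; slia.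
rewrite /fP.
have E1 : iota 0 L = iota 0 s ++ iota s (L - s) by rewrite -iotaD subnKC.
have E2 : iota 0 L = iota 0 (L - s) ++ iota (L - s) s by rewrite -iotaD subnK.
rewrite {1}E1 E2 !count_cat.
rewrite (eq_in_count (a1 := fun q => [exists p in P, _]) (a2 := pred0) (s := iota 0 s)) ?count_pred0; last first.
  move=> q; rewrite mem_iota /= => qs.
  apply/negbTE/negP => /exists_inP[p pP /andP[h _]]; move: h qs; slia.
rewrite add0n -[s in iota s _]addn0 iotaDl count_map.
rewrite [count _ (iota (L - s) s)](eq_in_count (a2 := pred0)) ?count_pred0 ?addn0; last first.
  move=> q; rewrite mem_iota /= => /andP[h1 _].
  apply/negbTE/negP => /exists_inP[p pP /andP[_ h2]]; move: (Hv p pP) h1 h2; slia.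
apply: eq_count => q /=; apply: eq_existsb => p; congr (_ && _).
apply/idP/idP; slia.
Qed.
End Cov.

Section SS.
Variables (L : nat) (u : seq nat) (P : {set 'I_L.+1}).

Definition Sm := \sum_(q < L) maxn 1 (Rm u P q).

Lemma R_gt q a : (a < Rm u P q) =
  [exists p in P, [&& p <= q, q < p + size u & a < nth 0 u (q - p)]].
Proof.
apply/idP/idP.
  move=> H; case E: [exists p in P, _] => //; move/negbT: E => /exists_inPn Hn.
  have : Rm u P q <= a.
    apply/bigmax_leqP => p /andP[pP /andP[h1 h2]].
    by have := Hn p pP; rewrite h1 h2 /= -leqNgt.
  by rewrite leqNgt H.
case/exists_inP => p pP /and3P[h1 h2 h3].
apply: (leq_trans h3); apply: (leq_bigmax_cond p); by rewrite pP h1 h2.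
Qed.

Hypothesis Hv : forall p, p \in P -> p + size u <= L.

Lemma count_R a : inc_dec_fact u ->
  count (fun q => a < Rm u P q) (iota 0 L) = fP P (count (fun x => a < x) u).
Proof.
move=> Hu.
have [s [Hs Hj]] := u_interval a Hu.
rewrite -(shift_count (s := s)); last by move=> p pP; move: (Hv pP) Hs; slia.
apply: eq_count => q; rewrite R_gt; apply: eq_existsb => p; congr (_ && _).
case: (leqP p q) => pq /=.
  have := Hj (q - p); rewrite ltn_subLR // => ->.
  by rewrite leq_subRL // ltn_subLR // addnA.
by apply/esym/negbTE/negP; slia.
Qed.

Lemma S_thr K : inc_dec_fact u -> (forall x, x \in u -> x <= K) ->
  Sm = L + \sum_(1 <= a < K) fP P (count (fun x => a < x) u).
Proof.
move=> Hu HK.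
have RK : forall q, Rm u P q <= K.
  move=> q; apply/bigmax_leqP => p _.
  case: (ltnP (q - p) (size u)) => h; first by apply: HK; exact: mem_nth.
  by rewrite nth_default.
rewrite /Sm; transitivity (\sum_(q < L) (1 + \sum_(1 <= a < K) (a < Rm u P q : nat))).
  by apply: eq_bigr => q _; rewrite (maxn1_thr (RK q)).
rewrite big_split /= sum_nat_const card_ord muln1; congr (_ + _).
rewrite exchange_big /=; apply: eq_bigr => a _.
by rewrite (sum_count_iota (fun q => a < Rm u P q)) count_R.
Qed.
End SS.
Section IE.
Variables (T I : finType) (A : pred T) (D : T -> I -> bool).
Local Open Scope ring_scope.

Lemma card_sumZ (Q : pred T) : (#|[set w | Q w]|%:R : int) = \sum_w ((Q w)%:R : int).
Proof.
rewrite -sum1_card natr_sum big_mkcond /=; apply: eq_bigr => w _.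
by rewrite inE; case: (Q w).
Qed.

Lemma prod_forall w (J : {set I}) :
  \prod_i (if i \in J then - ((D w i)%:R : int) else 1) =
  (-1) ^+ #|J| * ([forall i in J, D w i])%:R.
Proof.
rewrite -big_mkcond /= prodrN; congr (_ * _).
case: (boolP [forall i in J, D w i]) => H.
  by rewrite big1 // => i iJ; move/forall_inP: H => /(_ i iJ) ->.
case/forall_inPn: H => i iJ Di.
by rewrite (bigD1 i iJ) /= (negbTE Di) mul0r.
Qed.

Lemma prod_exists w :
  1 - (([exists i, D w i])%:R : int) = \prod_i (- ((D w i)%:R) + 1).
Proof.
case: (boolP [exists i, D w i]) => H.
  case/existsP: H => i Di.
  by rewrite (bigD1 i) //= Di subrr addNr mul0r.
rewrite subr0 big1 // => i _.
by move/existsPn: H => /(_ i) /negbTE ->; rewrite oppr0 add0r.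
Qed.

Definition Xc (P : {set I}) := #|[set w | A w && [forall i in P, D w i]]|.

Lemma IE :
  (#|[set w | A w]|%:R : int) - (#|[set w | A w && [exists i, D w i]]|%:R)
  = \sum_(P : {set I}) (-1) ^+ #|P| * (Xc P)%:R.
Proof.
rewrite !card_sumZ -sumrB.
transitivity (\sum_w (A w)%:R * (1 - (([exists i, D w i])%:R : int))).
  by apply: eq_bigr => w _; case: (A w); rewrite ?mul1r ?mul0r ?subrr.
under eq_bigr => w _ do rewrite prod_exists bigA_distr mulr_sumr.
rewrite exchange_big /=; apply: eq_bigr => P _.
rewrite /Xc card_sumZ mulr_sumr; apply: eq_bigr => w _.
rewrite prod_forall mulrCA; congr (_ * _).
by case: (A w); rewrite ?mul1r ?mul0r.
Qed.
End IE.

Section IE2.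
Variables (T I : finType) (A : pred T) (D1 D2 : T -> I -> bool).
Local Open Scope ring_scope.

Lemma IE_eq : (forall P, Xc A D1 P = Xc A D2 P) ->
  #|[set w | A w && [exists i, D1 w i]]| = #|[set w | A w && [exists i, D2 w i]]|.
Proof.
move=> H.
have E1 := IE A D1; have E2 := IE A D2.
have E : \sum_(P : {set I}) (-1) ^+ #|P| * ((Xc A D1 P)%:R : int) =
         \sum_(P : {set I}) (-1) ^+ #|P| * (Xc A D2 P)%:R.
  by apply: eq_bigr => P _; rewrite H.
rewrite -E1 -E2 in E.
apply/eqP; rewrite -(eqr_nat int); apply/eqP.
by move: E => /addrI /oppr_inj.
Qed.

Lemma IE_neq (P0 : {set I}) : Xc A D1 P0 <> Xc A D2 P0 ->
  (forall P, P != P0 -> Xc A D1 P = Xc A D2 P) ->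
  #|[set w | A w && [exists i, D1 w i]]| <> #|[set w | A w && [exists i, D2 w i]]|.
Proof.
move=> H0 H Heq.
have E1 := IE A D1; have E2 := IE A D2.
rewrite Heq E2 in E1.
move/eqP: E1; rewrite -subr_eq0 -sumrB (bigD1 P0) //= big1 ?addr0.
  rewrite -mulrBr mulf_eq0 signr_eq0 /= subr_eq0 eqr_nat.
  by move/eqP => /esym.
by move=> P /H ->; rewrite subrr.
Qed.
End IE2.

Lemma mem_le_sumn (s : seq nat) x : x \in s -> x <= sumn s.
Proof.
elim: s => [|y s IH] //=; rewrite inE => /orP[/eqP ->|/IH h]; first exact: leq_addr.
by apply: leq_trans h (leq_addl _ _).
Qed.

Lemma backward u v : inc_dec_fact u -> inc_dec_fact v -> perm_eq u v -> wilf_equiv u v.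
Proof.
move=> Hu Hv Hp L m; rewrite !Fcoef_E.
apply: IE_eq => P; rewrite /Xc.
have Hsz : size v = size u by rewrite (perm_size Hp).
case: (boolP [exists p in P, L < p + size u]).
  case/exists_inP=> p pP Hp'.
  by rewrite (X_inval m pP Hp') (X_inval (u:=v) m pP) // Hsz.
move/exists_inPn => Hn.
have Hval : forall p, p \in P -> p + size u <= L by move=> p /Hn; rewrite -leqNgt.
rewrite (X_val m Hval) X_val; last by rewrite Hsz.
apply: Cnt_eq.
have HK : forall x, x \in v -> x <= sumn u.
  by move=> x xv; rewrite (perm_sumn Hp); apply: mem_le_sumn.
change (Sm u P = Sm v P).
rewrite (S_thr Hval (K := sumn u) Hu); last exact: mem_le_sumn.
have Hval' : forall p, p \in P -> p + size v <= L by rewrite Hsz.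
rewrite (S_thr Hval' (K := sumn u) Hv) //.
congr (_ + _); apply: eq_bigr => a _.
by rewrite (permP Hp).
Qed.

Lemma count_int a b L : count (fun q => (a <= q) && (q < b)) (iota 0 L) = minn b L - a.
Proof.
elim: L => [|L IH]; first by rewrite minn0.
rewrite count_iotaS IH.
case: (leqP a L) => h1; case: (ltnP L b) => h2 /=; slia.
Qed.

Section FP.
Variable L : nat.
Implicit Types P : {set 'I_L.+1}.

Definition Mx P := \max_(p in P) (p : nat).

Definition Gap P g := forall x, (exists2 p, p \in P & p <= x) -> x < Mx P ->
  exists2 p, p \in P & (p <= x) && (x < p + g).

Lemma Mx_in P : P != set0 -> exists2 p, p \in P & (p : nat) = Mx P.
Proof.
move=> H; have : 0 < #|P| by rewrite card_gt0.
move/(eq_bigmax_cond (fun p : 'I_L.+1 => (p : nat))) => [p pP Hp].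
by exists p.
Qed.

Lemma le_Mx P p : p \in P -> p <= Mx P.
Proof. by move=> pP; apply: (leq_bigmax_cond (F := fun p : 'I_L.+1 => (p : nat))). Qed.

Lemma fP_step P g c : P != set0 -> Gap P g -> g <= c -> Mx P + c < L ->
  fP P c.+1 = (fP P c).+1.
Proof.
move=> Hne Hg Hgc HL.
have [pM pMP HpM] := Mx_in Hne.
set q0 := Mx P + c.
have Hncov : ~~ cov P c q0.
  apply/negP => /exists_inP[p pP /andP[_ h]].
  by move: (le_Mx pP) h; rewrite /q0; slia.
have E : cov P c.+1 =1 predU (cov P c) (pred1 q0).
  move=> q /=; apply/idP/idP.
    case/exists_inP => p pP /andP[h1 h2].
    case: (ltnP q (p + c)) => h3.
      by apply/orP; left; apply/exists_inP; exists p; rewrite ?h1 ?h3.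
    have qe : q = p + c by move: h2 h3; slia.
    case: (eqVneq q q0) => [->|hq]; first by rewrite orbT.
    rewrite orbF.
    have hM := le_Mx pP.
    case: (ltnP q (Mx P)) => h4.
      have [p' p'P /andP[h5 h6]] := Hg q (ex_intro2 _ _ p pP h1) h4.
      by apply/exists_inP; exists p' => //; rewrite h5 /=; move: h6 Hgc; slia.
    apply/exists_inP; exists pM => //; rewrite HpM h4 /=.
    by move: hq qe hM; rewrite /q0; slia.
  case/orP.
    case/exists_inP => p pP /andP[h1 h2].
    by apply/exists_inP; exists p => //; rewrite h1 /=; move: h2; slia.
  move/eqP => ->; apply/exists_inP; exists pM => //; rewrite HpM /q0; slia.
rewrite /fP (eq_count E).
have := count_predUI (cov P c) (pred1 q0) (iota 0 L).
rewrite (eq_in_count (a1 := predI _ _) (a2 := pred0)) ?count_pred0; last first.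
  move=> q _ /=; apply/negbTE/negP => /andP[h /eqP hq].
  by rewrite hq (negbTE Hncov) in h.
rewrite count_uniq_mem ?iota_uniq // mem_iota add0n /q0 HL /= addn0 => ->.
by rewrite addn1.
Qed.

Lemma fP_lin P g c : P != set0 -> Gap P g -> Mx P + c <= L ->
  fP P c = fP P (minn c g) + (c - minn c g).
Proof.
move=> Hne Hg HL.
case: (leqP c g) => hcg.
  by rewrite subnn addn0.

have [k Hk] : exists k, c = g + k by exists (c - g); rewrite subnKC // ltnW.
subst c; rewrite addKn.
elim: k HL {hcg} => [|k IH] HL; first by rewrite !addn0.
rewrite addnS (fP_step Hne Hg) ?leq_addr //; last by move: HL; slia.
by rewrite IH ?addnS //; move: HL; slia.
Qed.
End FP.

Section P0.
Variables n e : nat.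
Definition P0 : {set 'I_(n + e).+1} := [set ord0; inord e].

Lemma val_inord_e : ((inord e : 'I_(n + e).+1) : nat) = e.
Proof. by rewrite inordK // ltnS leq_addl. Qed.

Lemma fP_P0 c : c <= n -> fP P0 c = c + minn c e.
Proof.
move=> hc.
have E : cov P0 c =1 predU (fun q => (0 <= q) && (q < c)) (fun q => (e <= q) && (q < e + c)).
  move=> q /=; apply/exists_inP/orP.
    case=> p; rewrite /P0 !inE => /orP[/eqP->|/eqP->] /andP[h1 h2].
      by left; move: h2 => /=; slia.
    by right; move: h1 h2; rewrite val_inord_e => -> ->.
  case=> [h2|/andP[h1 h2]].
    by exists ord0; rewrite /P0 ?inE ?eqxx //= h2.
  by exists (inord e); rewrite /P0 ?inE ?eqxx ?orbT // val_inord_e h1.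
rewrite /fP (eq_count E).
have := count_predUI (fun q => (0 <= q) && (q < c)) (fun q => (e <= q) && (q < e + c)) (iota 0 (n + e)).
rewrite (eq_count (a1 := predI _ _) (a2 := fun q => (e <= q) && (q < c))); last first.
  move=> q /=; apply/idP/idP; slia.
rewrite !count_int; move: hc; slia.
Qed.
End P0.

Lemma gap_P n e (P : {set 'I_(n + e).+1}) : 0 < e -> (forall p, p \in P -> p <= e) ->
  P != set0 -> P != P0 n e -> Gap P e.-1.
Proof.
move=> e0 Hle Hne HP0 x [p1 p1P hp1] hxM.
case: (boolP [exists p in P, (p <= x) && (x < p + e.-1)]) => [/exists_inP[p pP h]|/exists_inPn Hno].
  by exists p.
exfalso; move/negP: HP0; apply; apply/eqP/setP => y; rewrite /P0 !inE.
have [pM pMP HpM] := Mx_in Hne.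
have hMe : Mx P <= e by rewrite -HpM; apply: Hle.
have := Hno p1 p1P; rewrite hp1 /= -leqNgt => hx.
have p10 : p1 = ord0 by apply: ord_inj => /=; move: hx hxM hMe e0; slia.
have pMe : pM = inord e.
  by apply: ord_inj; rewrite val_inord_e HpM; move: hx hxM hMe e0; move: (Mx P) (nat_of_ord p1) => M k; slia.
have xe : x = e.-1 by move: hx hxM hMe e0; slia.
apply/idP/idP.
  move=> yP; have ye := Hle y yP.
  case: (posnP y) => y0.
    by apply/orP; left; apply/eqP; apply: ord_inj.
  case: (eqVneq (y : nat) e) => yE.
    by apply/orP; right; apply/eqP; apply: ord_inj; rewrite val_inord_e.
  have := Hno y yP; rewrite xe negb_and -ltnNge -leqNgt => /orP[] h; exfalso;
    move: h ye y0 yE e0; slia.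
by case/orP => /eqP ->; [rewrite -p10 | rewrite -pMe].
Qed.

Lemma Fcoef_small v L m : L < size v -> Fcoef v L m = 0.
Proof.
move=> h; apply: eq_card0 => w; rewrite inE.
rewrite (gfo_exists _ (N := L)) ?size_map ?size_tuple //.
apply/negP => /and3P[_ _ /existsP[p /DmP[hp _]]].
by move: hp h; rewrite size_map size_tuple; slia.
Qed.

Lemma Fcoef_self u : pword u -> 0 < Fcoef u (size u) (sumn u).
Proof.
move=> pu.
pose w : (size u).-tuple 'I_(sumn u).+1 := [tuple (inord (nth 0 u i) : 'I_(sumn u).+1) | i < size u].
have Hw : map val w = u.
  apply: (@eq_from_nth _ 0); first by rewrite size_map size_tuple.
  move=> i; rewrite size_map size_tuple => hi.
  rewrite (nthW w (Ordinal hi)) tnth_mktuple inordK // ltnS.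
  by apply: mem_le_sumn; apply: mem_nth.
apply/card_gt0P; exists w; rewrite inE Hw pu eqxx /=.
rewrite (gfo_exists _ (N := size u)) //; apply/existsP; exists ord0.
by apply/DmP; split=> //.
Qed.

Lemma Fcoef_sum_lt u v : size u = size v -> sumn u < sumn v -> Fcoef v (size v) (sumn u) = 0.
Proof.
move=> Hs h; apply: eq_card0 => w; rewrite inE.
rewrite (gfo_exists _ (N := size v)) ?size_map ?size_tuple //.
apply/negP => /and3P[_ /eqP Hsm /existsP[p Hp]].
have p0 : (p : nat) = 0.
  by move/DmP: Hp => [hp _]; move: hp; rewrite size_map size_tuple; slia.
move: Hp; rewrite /Dm p0 drop0 take_oversize; last by rewrite size_map size_tuple.
case/andP => _ /sumn_all2; rewrite Hsm; slia.
Qed.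

Lemma sum_cnt u K : pword u -> (forall x, x \in u -> x <= K) ->
  \sum_(1 <= a < K) count (fun x => a < x) u + size u = sumn u.
Proof.
elim: u => [|x u IH] /=.
  by move=> _ _; rewrite big1.
case/andP => px pu HK.
rewrite (eq_bigr (fun a => (a < x : nat) + count (fun y => a < y) u)) // big_split /=.
rewrite thr_sum -(IH pu); last by move=> y yu; apply: HK; rewrite inE yu orbT.
have := HK x; rewrite inE eqxx => /(_ isT) hx.
move: px hx; slia.
Qed.

Lemma cntS (s : seq nat) x : 0 < x ->
  count (fun y => x.-1 < y) s = count_mem x s + count (fun y => x < y) s.
Proof.
move=> x0; elim: s => [|y s IH] //=; rewrite IH.
case: (ltngtP y x) => h /=.
- have -> : (x.-1 < y) = false by apply/negbTE; rewrite -leqNgt; slia.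
  by rewrite add0n.
- have -> : (x.-1 < y) = true by apply/idP; slia.
  by rewrite add0n addnCA add1n.
- rewrite h; have -> : (x.-1 < x) = true by apply/idP; slia.
  by rewrite add0n addnA.
Qed.

Lemma cnt_perm u v : pword u -> pword v ->
  (forall a, count (fun x => a < x) u = count (fun x => a < x) v) -> perm_eq u v.
Proof.
move=> pu pv H; rewrite /perm_eq; apply/allP => x _ /=; apply/eqP.
case: (posnP x) => [->|x0].
  have Z : forall s : seq nat, pword s -> count_mem 0 s = 0.
    move=> s ps; apply/eqP; rewrite -leqn0 leqNgt -has_count; apply/hasP => [[y ys /eqP y0]].
    by move/allP: ps => /(_ y ys); rewrite y0.
  by rewrite !Z.
have := cntS u x0; have := cntS v x0; rewrite !H => ->.
by move/eqP; rewrite eqn_add2r => /eqP.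
Qed.

Lemma sum_sub (F G : nat -> nat) K : (forall a, G a <= F a) ->
  \sum_(1 <= a < K) (F a - G a) = \sum_(1 <= a < K) F a - \sum_(1 <= a < K) G a.
Proof.
move=> H; apply/eqP; rewrite -(eqn_add2r (\sum_(1 <= a < K) G a)) subnK; last first.
  by apply: leq_sum => a _; apply: H.
by rewrite -big_split /=; apply/eqP; apply: eq_bigr => a _; rewrite subnK.
Qed.

Lemma strict_sum (F G : nat -> bool) K a0 : (forall a, F a -> G a) -> 1 <= a0 < K ->
  ~~ F a0 -> G a0 -> \sum_(1 <= a < K) (F a : nat) < \sum_(1 <= a < K) (G a : nat).
Proof.
move=> H /andP[h1 h2] nF gG.
have FG : forall a, (F a : nat) <= G a by move=> a; case: (boolP (F a)) => // /H ->.
have Hle : forall K', \sum_(1 <= a < K') (F a : nat) <= \sum_(1 <= a < K') (G a : nat).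
  by move=> K'; apply: leq_sum => a _.
elim: K h2 => [|K IH] h2 //.
have K1 : 1 <= K by move: h1 h2; slia.
rewrite !big_nat_recr //=.
case: (ltngtP a0 K) => h.
- by rewrite -addSn; apply: leq_add; [apply: IH | apply: FG].
- by move: h h2; slia.
- by rewrite -h (negbTE nF) gG addn0 addn1 ltnS.
Qed.

Lemma fP0 L c : fP (set0 : {set 'I_L.+1}) c = 0.
Proof.
rewrite /fP (eq_count (a2 := pred0)) ?count_pred0 // => q /=.
by apply/negbTE/negP => /exists_inP[p]; rewrite inE.
Qed.

Lemma cnt_mono (s : seq nat) a b : a <= b ->
  count (fun x => b < x) s <= count (fun x => a < x) s.
Proof. by move=> h; apply: sub_count => x /= hx; apply: leq_ltn_trans hx. Qed.

Lemma minn_split c e : 0 < e -> minn c e = minn c e.-1 + (e <= c).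
Proof. by move=> e0; case: (leqP e c) => h /=; slia. Qed.

Lemma forward u v : pword u -> pword v -> inc_dec_fact u -> inc_dec_fact v ->
  wilf_equiv u v -> perm_eq u v.
Proof.
move=> pu pv Hu Hv W.
have Hsz : size u = size v.
  case: (ltngtP (size u) (size v)) => h //.
    by have := Fcoef_self pu; rewrite W Fcoef_small.
  by have := Fcoef_self pv; rewrite -W Fcoef_small.
have Hsum : sumn u = sumn v.
  case: (ltngtP (sumn u) (sumn v)) => h //.
    by have := Fcoef_self pu; rewrite W Hsz Fcoef_sum_lt.
  by have := Fcoef_self pv; rewrite -W -Hsz Fcoef_sum_lt.
case: (boolP (perm_eq u v)) => // Hnp; exfalso.
set n := size u.
set K := sumn u.
pose cu a := count (fun x => a < x) u.
pose cv a := count (fun x => a < x) v.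
have HKu : forall x, x \in u -> x <= K by move=> x; apply: mem_le_sumn.
have HKv : forall x, x \in v -> x <= K by move=> x xv; rewrite /K Hsum; apply: mem_le_sumn.
have big0 : forall a, K <= a -> cu a = 0 /\ cv a = 0.
  move=> a Ka; split; apply/eqP; rewrite -leqn0 leqNgt -has_count; apply/hasP => [[x xs hx]].
    by move: (HKu x xs) Ka hx; slia.
  by move: (HKv x xs) Ka hx; slia.
have cu_le : forall a, cu a <= n by move=> a; apply: count_size.
have cv_le : forall a, cv a <= n by move=> a; rewrite /n Hsz; apply: count_size.
have [a1 ha1] : exists a : 'I_K, cu a != cv a.
  case: (boolP [exists a : 'I_K, cu a != cv a]) => [/existsP//|/existsPn Hall].
  move/negP: Hnp; case; apply: cnt_perm => // a.
  case: (ltnP a K) => aK; last by have [h1 h2] := big0 a aK; rewrite /cu /cv in h1 h2; rewrite h1 h2.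
  by have := Hall (Ordinal aK); rewrite negbK => /eqP.
pose G g := [exists a : 'I_K, minn (cu a) g != minn (cv a) g].
have exG : exists g, G g.
  by exists n; apply/existsP; exists a1; rewrite !(minn_idPl (cu_le _)) (minn_idPl (cv_le _)).
case: (ex_minnP exG) => e Ge Hmin.
have e0 : 0 < e.
  rewrite lt0n; apply/negP => /eqP e0; move: Ge; rewrite e0.
  by case/existsP => a; rewrite !minn0.
have Heq : forall a, minn (cu a) e.-1 = minn (cv a) e.-1.
  move=> a; case: (ltnP a K) => aK; last by have [-> ->] := big0 a aK.
  case: (eqVneq (minn (cu a) e.-1) (minn (cv a) e.-1)) => // hne.
  have : G e.-1 by apply/existsP; exists (Ordinal aK).
  by move/Hmin; move: e0; slia.
case/existsP: Ge => a0 Ha0.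
have a00 : 0 < a0.
  rewrite lt0n; apply/negP => /eqP a0z; move: Ha0.
  have c0 : forall s : seq nat, pword s -> count (fun x => 0 < x) s = size s.
    by move=> s ps; apply/eqP; rewrite -all_count.
  by rewrite /cu /cv a0z !c0 // -Hsz eqxx.
have Hmono_u : forall a b, a <= b -> cu b <= cu a by move=> a b; apply: cnt_mono.
have Hmono_v : forall a b, a <= b -> cv b <= cv a by move=> a b; apply: cnt_mono.
have Hsu := sum_cnt pu HKu.
have Hsv := sum_cnt pv HKv.
have Hsc : \sum_(1 <= a < K) cu a = \sum_(1 <= a < K) cv a.
  apply/eqP; rewrite -(eqn_add2r n); apply/eqP.
  rewrite [in RHS]/n Hsz.
  exact: (etrans Hsu (etrans Hsum (esym Hsv))).
have ClA : forall P : {set 'I_(n + e).+1}, (forall p, p \in P -> p <= e) -> P != P0 n e ->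
    Sm u P = Sm v P.
  move=> P Hle HP0.
  have Hvu : forall p, p \in P -> p + size u <= n + e by move=> p /Hle; rewrite -/n; slia.
  have Hvv : forall p, p \in P -> p + size v <= n + e by move=> p /Hle; rewrite -Hsz -/n; slia.
  rewrite (S_thr Hvu (K := K) Hu HKu) (S_thr Hvv (K := K) Hv HKv).
  congr (_ + _).
  case: (eqVneq P set0) => [->|Pne].
    by rewrite !big1 // => a _; rewrite fP0.
  have Hg := gap_P e0 Hle Pne HP0.
  have HM : Mx P <= e by have [pM pMP <-] := Mx_in Pne; apply: Hle.
  rewrite (eq_bigr (fun a => fP P (minn (cu a) e.-1) + (cu a - minn (cu a) e.-1))); last first.
    by move=> a _; apply: fP_lin => //; move: HM (cu_le a); rewrite /cu; slia.
  rewrite [in RHS](eq_bigr (fun a => fP P (minn (cu a) e.-1) + (cv a - minn (cu a) e.-1))); last first.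
    by move=> a _; rewrite Heq; apply: fP_lin => //; move: HM (cv_le a); rewrite /cv; slia.
  rewrite !big_split /=; congr (_ + _).
  rewrite !sum_sub ?Hsc //; last by move=> a; apply: geq_minl.
  by move=> a; rewrite Heq; apply: geq_minl.
have P0val : forall p, p \in P0 n e -> p <= e.
  by move=> p; rewrite /P0 !inE => /orP[/eqP->|/eqP->] //; rewrite val_inord_e.
have ClB : Sm u (P0 n e) <> Sm v (P0 n e).
  have Hvu : forall p, p \in P0 n e -> p + size u <= n + e by move=> p /P0val; rewrite -/n; slia.
  have Hvv : forall p, p \in P0 n e -> p + size v <= n + e by move=> p /P0val; rewrite -Hsz -/n; slia.
  rewrite (S_thr Hvu (K := K) Hu HKu) (S_thr Hvv (K := K) Hv HKv).
  have E1 : \sum_(1 <= a < K) fP (P0 n e) (count (fun x => a < x) u) =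
      \sum_(1 <= a < K) (cu a + (minn (cu a) e.-1 + (e <= cu a))).
    apply: eq_bigr => a _.
    by rewrite fP_P0 ?cu_le // (minn_split (count (fun x => a < x) u) e0).
  have E2 : \sum_(1 <= a < K) fP (P0 n e) (count (fun x => a < x) v) =
      \sum_(1 <= a < K) (cv a + (minn (cu a) e.-1 + (e <= cv a))).
    apply: eq_bigr => a _.
    by rewrite fP_P0 ?cv_le // (minn_split (count (fun x => a < x) v) e0) -(Heq a).
  rewrite E1 E2.
  rewrite !big_split /= Hsc.
  move/eqP; rewrite !eqn_add2l => /eqP.
  have Hne : (e <= cu a0) != (e <= cv a0).
    apply/negP => /eqP hh; move/eqP: Ha0; apply.
    by rewrite (minn_split (cu a0) e0) (minn_split (cv a0) e0) hh Heq.
  have a0K : 1 <= a0 < K by rewrite a00 ltn_ord.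
  case: (boolP (e <= cu a0)) => hu; [rewrite hu in Hne | rewrite (negbTE hu) in Hne].
    have hv' : ~~ (e <= cv a0) by move: Hne; case: (e <= cv a0).
    have := strict_sum (F := fun a => e <= cv a) (G := fun a => e <= cu a) _ a0K hv' hu.
    move=> H1 H2; suff Hi : forall a, e <= cv a -> e <= cu a by move: (H1 Hi); rewrite H2 ltnn.
    move=> a hv; case: (leqP a a0) => ha.
      by apply: leq_trans hu (Hmono_u _ _ ha).
    by move: (Hmono_v _ _ (ltnW ha)) hv hv'; rewrite -ltnNge; slia.
  have hv : e <= cv a0 by move: Hne; case: (e <= cv a0).
  have := strict_sum (F := fun a => e <= cu a) (G := fun a => e <= cv a) _ a0K hu hv.
  move=> H1 H2; suff Hi : forall a, e <= cu a -> e <= cv a by move: (H1 Hi); rewrite H2 ltnn.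
  move=> a hu'; case: (leqP a a0) => ha.
    by apply: leq_trans hv (Hmono_v _ _ ha).
  by move: (Hmono_u _ _ (ltnW ha)) hu' hu; rewrite -ltnNge; slia.
pose m := minn (Sm u (P0 n e)) (Sm v (P0 n e)).
have := W (n + e) m; rewrite !Fcoef_E.
apply: (IE_neq (P0 := P0 n e)).
  rewrite /Xc X_val; last by move=> p /P0val; rewrite -/n; slia.
  rewrite X_val; last by move=> p /P0val; rewrite -Hsz -/n; slia.
  rewrite /m; case: (ltngtP (Sm u (P0 n e)) (Sm v (P0 n e))) => h; last by case: (ClB h).
    rewrite (Cnt0 (r := fun q => maxn 1 (Rm v (P0 n e) q))); last exact: h.
    by apply/eqP; rewrite -lt0n; apply: Cnt_pos.
  rewrite (Cnt0 (r := fun q => maxn 1 (Rm u (P0 n e) q))); last exact: h.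
  by apply/eqP; rewrite eq_sym -lt0n; apply: Cnt_pos.
move=> P HP; rewrite /Xc.
case: (boolP [exists p in P, n + e < p + size u]).
  case/exists_inP=> p pP Hp'.
  by rewrite (X_inval m pP Hp') (X_inval (u:=v) m pP) // -Hsz.
move/exists_inPn => Hn.
have Hval : forall p, p \in P -> p + size u <= n + e by move=> p /Hn; rewrite -leqNgt.
rewrite (X_val m Hval) X_val; last by rewrite -Hsz.
apply: Cnt_eq; apply: ClA => //.
by move=> p /Hval; rewrite -/n; slia.
Qed.


Theorem theorem4 (u v : seq nat) :
  pword u -> pword v -> inc_dec_fact u -> inc_dec_fact v ->
  (wilf_equiv u v <-> perm_eq u v).
Proof.
move=> pu pv Hu Hv; split; first exact: forward.
exact: backward.
Qed.
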